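(* Let $h$ be a triangle center function. If the locus of $X_h$ over the 3-periodics of $E$ is an ellipse, then this ellipse is centered at the origin (the center of $E$) and its axes lie along the coordinate axes (the axes of $E$).
   Context: Fix real numbers $a>b>0$ and let $E$ be the ellipse $x^2/a^2+y^2/b^2=1$ (the elliptic billiard). A 3-periodic is a non-degenerate triangle $P_1P_2P_3$ with all vertices on $E$ such that at each vertex $P_j$ the normal line to $E$ at $P_j$ bisects the interior angle of the triangle at $P_j$. For a triangle $P_1P_2P_3$ let $s_1=|P_2P_3|$, $s_2=|P_3P_1|$, $s_3=|P_1P_2|$. A triangle center function is a function $h(x,y,z)$ that is homogeneous and bisymmetric ($h(x,y,z)=h(x,z,y)$). The associated triangle center is $X_h=\dfrac{p s_1P_1+q s_2P_2+r s_3P_3}{p s_1+q s_2+r s_3}$ with $p=h(s_1,s_2,s_3)$, $q=h(s_2,s_3,s_1)$, $r=h(s_3,s_1,s_2)$, defined when the denominator is nonzero. The locus of $X_h$ is the set of points $X_h(T)$ as $T$ ranges over all 3-periodics for which $X_h(T)$ is defined. *)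

(* Defs.v *)
From Stdlib Require Import Reals.
Open Scope R_scope.

Definition pt := (R * R)%type.

Definition dist (P Q : pt) : R :=
  sqrt ((fst P - fst Q) ^ 2 + (snd P - snd Q) ^ 2).

Definition cross (u v : pt) : R := fst u * snd v - snd u * fst v.

Definition vsub (P Q : pt) : pt := (fst P - fst Q, snd P - snd Q).

Definition on_ellipse (a b : R) (P : pt) : Prop :=
  fst P ^ 2 / a ^ 2 + snd P ^ 2 / b ^ 2 = 1.

(* outward normal direction of the ellipse at P (gradient / 2) *)
Definition ell_normal (a b : R) (P : pt) : pt := (fst P / a ^ 2, snd P / b ^ 2).

(* the interior angle bisector direction at vertex P between rays to Q and S:
   sum of the unit vectors from P towards Q and towards S *)
Definition bisector_dir (P Q S : pt) : pt :=
  (fst (vsub Q P) / dist Q P + fst (vsub S P) / dist S P,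
   snd (vsub Q P) / dist Q P + snd (vsub S P) / dist S P).

Definition nondegenerate (P1 P2 P3 : pt) : Prop :=
  cross (vsub P2 P1) (vsub P3 P1) <> 0.

(* the normal line at P bisects the interior angle at P (i.e. the normal
   line is parallel to the interior bisector through P) *)
Definition normal_bisects (a b : R) (P Q S : pt) : Prop :=
  cross (ell_normal a b P) (bisector_dir P Q S) = 0.

Definition periodic3 (a b : R) (P1 P2 P3 : pt) : Prop :=
  nondegenerate P1 P2 P3 /\
  on_ellipse a b P1 /\ on_ellipse a b P2 /\ on_ellipse a b P3 /\
  normal_bisects a b P1 P2 P3 /\
  normal_bisects a b P2 P3 P1 /\
  normal_bisects a b P3 P1 P2.

Definition triangle_center_function (h : R -> R -> R -> R) : Prop :=
  (exists k : R, forall t x y z, 0 < t -> 0 < x -> 0 < y -> 0 < z ->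
      h (t * x) (t * y) (t * z) = Rpower t k * h x y z) /\
  (forall x y z, 0 < x -> 0 < y -> 0 < z -> h x y z = h x z y).

Definition center_denom (h : R -> R -> R -> R) (P1 P2 P3 : pt) : R :=
  let s1 := dist P2 P3 in let s2 := dist P3 P1 in let s3 := dist P1 P2 in
  h s1 s2 s3 * s1 + h s2 s3 s1 * s2 + h s3 s1 s2 * s3.

Definition center_point (h : R -> R -> R -> R) (P1 P2 P3 : pt) : pt :=
  let s1 := dist P2 P3 in let s2 := dist P3 P1 in let s3 := dist P1 P2 in
  let p := h s1 s2 s3 in let q := h s2 s3 s1 in let r := h s3 s1 s2 in
  let d := p * s1 + q * s2 + r * s3 in
  ((p * s1 * fst P1 + q * s2 * fst P2 + r * s3 * fst P3) / d,
   (p * s1 * snd P1 + q * s2 * snd P2 + r * s3 * snd P3) / d).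

Definition locus (a b : R) (h : R -> R -> R -> R) (X : pt) : Prop :=
  exists P1 P2 P3, periodic3 a b P1 P2 P3 /\
    center_denom h P1 P2 P3 <> 0 /\ X = center_point h P1 P2 P3.

(* S is (the point set of) a non-degenerate ellipse: center (cx,cy),
   semi-axes p,q > 0, rotated by angle th *)
Definition is_ellipse (S : pt -> Prop) : Prop :=
  exists cx cy p q th, 0 < p /\ 0 < q /\
    forall X, S X <-> exists t,
      X = (cx + p * cos t * cos th - q * sin t * sin th,
           cy + p * cos t * sin th + q * sin t * cos th).

Definition is_centered_axis_ellipse (S : pt -> Prop) : Prop :=
  exists p q, 0 < p /\ 0 < q /\
    forall X, S X <-> fst X ^ 2 / p ^ 2 + snd X ^ 2 / q ^ 2 = 1.

(* Main.v *)
Require Import Defs.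
From Stdlib Require Import Reals Lra Psatz.
Open Scope R_scope.

Lemma circle_param (al be : R) : al ^ 2 + be ^ 2 = 1 ->
  exists t, cos t = al /\ sin t = be.
Proof.
  intros H.
  assert (Hb : -1 <= al <= 1) by nra.
  assert (Hs : sqrt (1 - al²) = Rabs be).
  { replace (1 - al²) with (be²) by (unfold Rsqr; nra). apply sqrt_Rsqr_abs. }
  destruct (Rle_lt_dec 0 be) as [Hp|Hn].
  - exists (acos al). rewrite cos_acos, sin_acos, Hs by lra.
    split; [reflexivity|]. apply Rabs_right; lra.
  - exists (- acos al). rewrite cos_neg, sin_neg, cos_acos, sin_acos, Hs by lra.
    split; [reflexivity|]. rewrite Rabs_left; lra.
Qed.

Definition refx (X : pt) : pt := (fst X, - snd X).
Definition refy (X : pt) : pt := (- fst X, snd X).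

Lemma dist_refx P Q : Defs.dist (refx P) (refx Q) = Defs.dist P Q.
Proof. unfold Defs.dist, refx; simpl. f_equal. ring. Qed.
Lemma dist_refy P Q : Defs.dist (refy P) (refy Q) = Defs.dist P Q.
Proof. unfold Defs.dist, refy; simpl. f_equal. ring. Qed.

Lemma locus_refx a b h X : locus a b h X -> locus a b h (refx X).
Proof.
  intros [P1 [P2 [P3 [[Hn [E1 [E2 [E3 [B1 [B2 B3]]]]]] [Hd ->]]]]].
  exists (refx P1), (refx P2), (refx P3).
  unfold periodic3, nondegenerate, on_ellipse, normal_bisects, center_denom,
    center_point, bisector_dir in *.
  rewrite !dist_refx. 
  unfold cross, vsub, ell_normal, refx in *; simpl in *.
  repeat split; try assumption.
  - intro H; apply Hn; lra.
  - lra. - lra. - lra.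
  - lra. - lra. - lra.
  - f_equal; field; assumption.
Qed.

Lemma locus_refy a b h X : locus a b h X -> locus a b h (refy X).
Proof.
  intros [P1 [P2 [P3 [[Hn [E1 [E2 [E3 [B1 [B2 B3]]]]]] [Hd ->]]]]].
  exists (refy P1), (refy P2), (refy P3).
  unfold periodic3, nondegenerate, on_ellipse, normal_bisects, center_denom,
    center_point, bisector_dir in *.
  rewrite !dist_refy. 
  unfold cross, vsub, ell_normal, refy in *; simpl in *.
  repeat split; try assumption.
  - intro H; apply Hn; lra.
  - lra. - lra. - lra.
  - lra. - lra. - lra.
  - f_equal; field; assumption.
Qed.

Lemma pow_eq_zero (x : R) (n : nat) : x ^ n = 0 -> x = 0.
Proof. intros H. destruct (Req_dec x 0) as [E|E]; [exact E|]. exfalso; exact (pow_nonzero x n E H). Qed.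

Theorem lemma3 (a b : R) (h : R -> R -> R -> R) :
  a > b -> b > 0 ->
  triangle_center_function h ->
  is_ellipse (locus a b h) ->
  is_centered_axis_ellipse (locus a b h).
Proof.
  intros _ _ _ [cx [cy [p [q [th [Hp [Hq HS]]]]]]].
  set (C := cos th) in *. set (Sn := sin th) in *.
  assert (HCS : C ^ 2 + Sn ^ 2 = 1).
  { pose proof (sin2_cos2 th). unfold Rsqr in H. unfold C, Sn. nra. }
  set (d1 := fun X : pt => (fst X - cx) * C + (snd X - cy) * Sn).
  set (d2 := fun X : pt => - (fst X - cx) * Sn + (snd X - cy) * C).
  assert (Hmem : forall X, locus a b h X ->
     exists t, d1 X = p * cos t /\ d2 X = q * sin t).
  { intros X HX. apply HS in HX. destruct HX as [t ->]. exists t.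
    unfold d1, d2; simpl. split.
    - replace ((cx + p * cos t * C - q * sin t * Sn - cx) * C +
         (cy + p * cos t * Sn + q * sin t * C - cy) * Sn)
        with (p * cos t * (C ^ 2 + Sn ^ 2)) by ring. rewrite HCS; ring.
    - replace (- (cx + p * cos t * C - q * sin t * Sn - cx) * Sn +
         (cy + p * cos t * Sn + q * sin t * C - cy) * C)
        with (q * sin t * (C ^ 2 + Sn ^ 2)) by ring. rewrite HCS; ring. }
  set (X0 := (cx + p * cos 0 * C - q * sin 0 * Sn, cy + p * cos 0 * Sn + q * sin 0 * C)).
  set (Xpi := (cx + p * cos PI * C - q * sin PI * Sn, cy + p * cos PI * Sn + q * sin PI * C)).
  assert (H0 : locus a b h X0) by (apply HS; exists 0; reflexivity).
  assert (Hpi : locus a b h Xpi) by (apply HS; exists PI; reflexivity).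
  destruct (Hmem _ (locus_refx _ _ _ _ (locus_refy _ _ _ _ H0))) as [t1 [E1 F1]].
  destruct (Hmem _ (locus_refx _ _ _ _ (locus_refy _ _ _ _ Hpi))) as [t2 [E2 F2]].
  unfold d1, d2, X0, Xpi, refx, refy in E1, F1, E2, F2; simpl in E1, F1, E2, F2.
  rewrite cos_0, sin_0 in E1, F1. rewrite cos_PI, sin_PI in E2, F2.
  pose proof (sin2_cos2 t1) as T1. pose proof (sin2_cos2 t2) as T2.
  unfold Rsqr in T1, T2.
  set (a1 := cx * C + cy * Sn) in *. set (a2 := - cx * Sn + cy * C) in *.
  assert (E1' : -2 * a1 - p = p * cos t1) by (rewrite <- E1; unfold a1; nra).
  assert (F1' : -2 * a2 = q * sin t1) by (rewrite <- F1; unfold a2; nra).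
  assert (E2' : -2 * a1 + p = p * cos t2) by (rewrite <- E2; unfold a1; nra).
  assert (F2' : -2 * a2 = q * sin t2) by (rewrite <- F2; unfold a2; nra).
  assert (G1 : (-2 * a1 - p) ^ 2 * q ^ 2 + (-2 * a2) ^ 2 * p ^ 2 = p ^ 2 * q ^ 2).
  { rewrite E1', F1'. match goal with |- ?L = _ => replace L with (p ^ 2 * q ^ 2 * (sin t1 * sin t1 + cos t1 * cos t1)) by ring end; rewrite T1; ring. }
  assert (G2 : (-2 * a1 + p) ^ 2 * q ^ 2 + (-2 * a2) ^ 2 * p ^ 2 = p ^ 2 * q ^ 2).
  { rewrite E2', F2'. match goal with |- ?L = _ => replace L with (p ^ 2 * q ^ 2 * (sin t2 * sin t2 + cos t2 * cos t2)) by ring end; rewrite T2; ring. }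
  assert (Ha1 : a1 = 0).
  { assert (8 * a1 * p * q ^ 2 = 0) by nra.
    assert (p * q ^ 2 <> 0) by (apply Rmult_integral_contrapositive; split; [lra| apply pow_nonzero; lra]).
    nra. }
  assert (Ha2 : a2 = 0).
  { rewrite Ha1 in G1.
    assert (Hz : (-2 * 0 - p) ^ 2 * q ^ 2 = p ^ 2 * q ^ 2) by ring.
    assert (Hw : ((-2 * a2) * p) ^ 2 = 0) by (rewrite Rpow_mult_distr; lra).
    apply pow_eq_zero in Hw. apply Rmult_integral in Hw. lra. }
  assert (Hcx : cx = 0).
  { assert (cx = a1 * C - a2 * Sn) as Ecx by (unfold a1, a2; transitivity (cx * (C ^ 2 + Sn ^ 2)); [rewrite HCS; ring | ring]). rewrite Ecx, Ha1, Ha2; ring. }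
  assert (Hcy : cy = 0).
  { assert (cy = a1 * Sn + a2 * C) as Ecy by (unfold a1, a2; transitivity (cy * (C ^ 2 + Sn ^ 2)); [rewrite HCS; ring | ring]). rewrite Ecy, Ha1, Ha2; ring. }
  clear E1 F1 E2 F2 E1' F1' E2' F2' G1 G2 T1 T2.
  destruct (Hmem _ (locus_refx _ _ _ _ H0)) as [t3 [E3 F3]].
  unfold d1, d2, X0, refx in E3, F3; simpl in E3, F3.
  rewrite cos_0, sin_0, Hcx, Hcy in E3, F3.
  pose proof (sin2_cos2 t3) as T3. unfold Rsqr in T3.
  assert (E3' : p * (C ^ 2 - Sn ^ 2) = p * cos t3) by (rewrite <- E3; ring).
  assert (F3' : -2 * p * Sn * C = q * sin t3) by (rewrite <- F3; ring).
  assert (G3 : (p * (C ^ 2 - Sn ^ 2)) ^ 2 * q ^ 2 + (-2 * p * Sn * C) ^ 2 * p ^ 2 = p ^ 2 * q ^ 2).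
  { rewrite E3', F3'. match goal with |- ?L = _ => replace L with (p ^ 2 * q ^ 2 * (sin t3 * sin t3 + cos t3 * cos t3)) by ring end; rewrite T3; ring. }
  assert (G3' : 4 * p ^ 2 * (Sn * C) ^ 2 * (p ^ 2 - q ^ 2) = 0).
  { assert (Hid : (C ^ 2 - Sn ^ 2) ^ 2 = 1 - 4 * (Sn * C) ^ 2).
    { transitivity ((C ^ 2 + Sn ^ 2) ^ 2 - 4 * (Sn * C) ^ 2); [ring | rewrite HCS; ring]. }
    rewrite (Rpow_mult_distr p), Hid in G3.
    match type of G3 with ?L = ?R => transitivity (L - R); [ring | lra] end. }
  assert (Hchar : forall X, locus a b h X <-> (d1 X / p) ^ 2 + (d2 X / q) ^ 2 = 1).
  { intros X; split.
    - intros HX. destruct (Hmem X HX) as [t [A B]]. rewrite A, B.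
      pose proof (sin2_cos2 t). unfold Rsqr in H. field_simplify; nra.
    - intros HX. destruct (circle_param _ _ HX) as [t [A B]].
      apply HS. exists t. rewrite A, B. unfold d1, d2. rewrite Hcx, Hcy.
      destruct X as [x y]; simpl. f_equal;
      [transitivity (x * (C ^ 2 + Sn ^ 2)) | transitivity (y * (C ^ 2 + Sn ^ 2))];
      try (rewrite HCS; ring); field; lra. }
  assert (Hcase : Sn * C = 0 \/ p = q).
  { assert (Sn * C = 0 \/ p ^ 2 - q ^ 2 = 0).
    { assert (4 * p ^ 2 <> 0) by (apply Rmult_integral_contrapositive; split; [lra| apply pow_nonzero; lra]).
      apply Rmult_integral in G3'. destruct G3' as [G|G]; [left|right; exact G].
      apply Rmult_integral in G. destruct G as [G|G]; [contradiction|].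
      apply pow_eq_zero in G. exact G. }
    destruct H as [H|H]; [left; exact H| right; nra]. }
  unfold is_centered_axis_ellipse.
  assert (Fin : forall P Q, 0 < P -> 0 < Q ->
    (forall X, (d1 X / p) ^ 2 + (d2 X / q) ^ 2 = fst X ^ 2 / P ^ 2 + snd X ^ 2 / Q ^ 2) ->
    exists P Q, 0 < P /\ 0 < Q /\ forall X, locus a b h X <-> fst X ^ 2 / P ^ 2 + snd X ^ 2 / Q ^ 2 = 1).
  { intros P Q HP HQ HE. exists P, Q. split; [exact HP| split; [exact HQ|]].
    intros X. rewrite Hchar, HE. tauto. }
  destruct Hcase as [Hsc | Hpq].
  - apply Rmult_integral in Hsc. destruct Hsc as [Hs | Hc].
    + apply (Fin p q); try lra. intros [x y]. unfold d1, d2; cbv beta; simpl.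
      rewrite Hcx, Hcy, Hs. assert (H : C ^ 2 = 1) by (rewrite Hs in HCS; lra).
      transitivity (x ^ 2 * C ^ 2 / p ^ 2 + y ^ 2 * C ^ 2 / q ^ 2); [field; lra | rewrite H; field; lra].
    + apply (Fin q p); try lra. intros [x y]. unfold d1, d2; cbv beta; simpl.
      rewrite Hcx, Hcy, Hc. assert (H : Sn ^ 2 = 1) by (rewrite Hc in HCS; lra).
      transitivity (y ^ 2 * Sn ^ 2 / p ^ 2 + x ^ 2 * Sn ^ 2 / q ^ 2); [field; lra | rewrite H; field; lra].
  - subst q. apply (Fin p p); try lra. intros [x y]. unfold d1, d2; cbv beta; simpl.
    rewrite Hcx, Hcy.
    transitivity ((x ^ 2 + y ^ 2) * (C ^ 2 + Sn ^ 2) / p ^ 2); [field; lra | rewrite HCS; field; lra].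
Qed.
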